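(* Let $F$ be a forest and $t$ a positive constant. Then there exists a (zero,degree)-assignment $\tau'$ for $F$ with $\overline{\tau'}\le t$ and $Ldyn_t(F)=dyn_{\tau'}(F)$.
   Context: A threshold assignment is a function $\tau:V(F)\to\{0,1,2,\dots\}$ with $\tau(v)\le deg_F(v)$ for every $v$; $\overline{\tau}=\sum_v\tau(v)/|V(F)|$. A (zero,degree)-assignment is one with $\tau(v)\in\{0,deg_F(v)\}$ for every vertex $v$. A set $D\subseteq V(F)$ is a $\tau$-dynamo if $V(F)$ can be partitioned into $D_0=D,D_1,\dots,D_k$ such that for each $1\le i\le k$, $D_i$ consists of all vertices not in $D_0\cup\dots\cup D_{i-1}$ having at least $\tau(v)$ neighbors in $D_0\cup\dots\cup D_{i-1}$; $dyn_\tau(F)$ is the minimum size of a $\tau$-dynamo. $Ldyn_t(F)=\max\{dyn_\tau(F):\overline{\tau}\le t\}$. *)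

(* Defs.v *)
From HB Require Import structures.
From mathcomp Require Import all_boot all_order all_algebra.
From mathcomp Require Import boolp reals.
Set Implicit Arguments. Unset Strict Implicit. Unset Printing Implicit Defensive.
Import Order.TTheory GRing.Theory Num.Theory.

Section Dyn.
Variable T : finType.
Variable e : rel T.

Definition simple_graph := symmetric e /\ irreflexive e.

Definition has_cycle := exists s : seq T, [&& uniq s, 2 < size s & cycle e s].

Definition forest := simple_graph /\ ~ has_cycle.

Definition deg (v : T) : nat := #|[set u | e v u]|.

Definition threshold_assignment (tau : T -> nat) := forall v, tau v <= deg v.

Definition zero_degree_assignment (tau : T -> nat) :=
  forall v, tau v = 0 \/ tau v = deg v.

Definition avg_tau (R : realType) (tau : T -> nat) : R :=
  ((\sum_v tau v)%N)%:R / (#|T|)%:R.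

Definition step (tau : T -> nat) (S : {set T}) : {set T} :=
  S :|: [set v | (v \notin S) && (tau v <= #|[set u in S | e v u]|)].

(* D is a tau-dynamo: the sets D_0 = D, D_i = step(D_0 u .. u D_{i-1}) \ (D_0 u .. u D_{i-1})
   partition V(F) for some k, i.e. D_0 u ... u D_k = iter k (step tau) D = V(F). *)
Definition dynamo (tau : T -> nat) (D : {set T}) :=
  exists k, iter k (step tau) D = setT.

(* dyn_tau(F): minimum size of a tau-dynamo (setT is always one) *)
Definition dyn (tau : T -> nat) : nat :=
  \big[minn/#|T|]_(D : {set T} | `[< dynamo tau D >]) #|D|.

(* Ldyn_t(F) = max { dyn_tau(F) : tau threshold assignment, avg tau <= t }.
   Since tau(v) <= deg(v) < |V(F)|, every threshold assignment is encoded
   by a finite function T -> 'I_(|V(F)|+1). *)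
Definition Ldyn (R : realType) (t : R) : nat :=
  \max_(tau : {ffun T -> 'I_#|T|.+1} |
          `[< threshold_assignment (fun v => tau v) >] &&
          (avg_tau R (fun v => tau v) <= t)%R)
     dyn (fun v => tau v).

End Dyn.

(* Main.v *)
Require Import Defs.
From HB Require Import structures.
From mathcomp Require Import all_boot all_order all_algebra.
From mathcomp Require Import boolp reals.
From mathcomp Require Import zify.
Import Order.TTheory GRing.Theory Num.Theory.
Set Implicit Arguments. Unset Strict Implicit. Unset Printing Implicit Defensive.


Lemma in_step (T : finType) (e : rel T) tau (S : {set T}) x :
  (x \in step e tau S) = (x \in S) || (tau x <= #|[set w in S | e x w]|).
Proof. by rewrite /step !inE; case: (x \in S). Qed.

Lemma step_sub (T : finType) (e : rel T) tau (S : {set T}) : S \subset step e tau S.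
Proof. by apply/subsetP=> x xS; rewrite in_step xS. Qed.

Lemma dyn_le (T : finType) (e : rel T) tau D : dynamo e tau D -> dyn e tau <= #|D|.
Proof.
move=> H; rewrite /dyn.
have : D \in index_enum {set T} by rewrite mem_index_enum.
elim: (index_enum _) => //= a r IH; rewrite inE big_cons.
case/orP=> [/eqP <-|/IH Hr].
  case: asboolP => // _; exact: geq_minl.
case: asboolP => // _; exact: leq_trans (geq_minr _ _) Hr.
Qed.

Lemma dyn_ge (T : finType) (e : rel T) tau m :
  (forall D, dynamo e tau D -> m <= #|D|) -> m <= dyn e tau.
Proof.
move=> H; rewrite /dyn; apply: (big_ind (fun x => m <= x)).
- rewrite -cardsT; apply: H; by exists 0.
- by move=> a b ha hb; rewrite leq_min ha hb.
- by move=> D /asboolP /H.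
Qed.

Lemma sim (T : finType) (e e' : rel T) tau tau' (P : {set T} -> {set T} -> Prop) D' D :
  (forall S' S, P S' S -> P (step e' tau' S') (step e tau S)) -> P D' D ->
  (forall S, P setT S -> dynamo e tau S) -> dynamo e' tau' D' -> dynamo e tau D.
Proof.
move=> Hs H0 Hend [k Hk].
have : P (iter k (step e' tau') D') (iter k (step e tau) D).
  by elim: k {Hk} => //= k IH; apply: Hs.
rewrite Hk => /Hend [j Hj]; exists (j + k); by rewrite iterD.
Qed.

Lemma dyn_sim (T : finType) (e e' : rel T) tau tau' c :
  (forall D', dynamo e' tau' D' -> exists2 D, dynamo e tau D & #|D| <= #|D'| + c) ->
  dyn e tau <= dyn e' tau' + c.
Proof.
move=> H; rewrite /dyn; set d := \big[minn/#|T|]_(D | _) _.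
apply: (big_ind (fun x => d <= x + c)).
- apply: leq_trans (leq_addr _ _); rewrite -cardsT; apply: dyn_le; by exists 0.
- by move=> a b ha hb; rewrite addn_minl leq_min ha hb.
- move=> D /asboolP /H [D2 HD2 le]; apply: leq_trans le; exact: dyn_le.
Qed.


Definition rm (T : eqType) (e : rel T) (u v : T) : rel T :=
  fun x y => e x y && ~~ (((x == u) && (y == v)) || ((x == v) && (y == u))).

Lemma rm_sub (T : eqType) (e : rel T) u v x y : rm e u v x y -> e x y.
Proof. by case/andP. Qed.

Lemma forest_rm (T : finType) (e : rel T) u v : forest e -> forest (rm e u v).
Proof.
move=> [[sy ir] nc]; split; first split.
- move=> x y; rewrite /rm sy; congr (_ && ~~ _).
  by rewrite orbC; congr (_ || _); rewrite andbC.
- by move=> x; rewrite /rm ir.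
- move=> [s /and3P [us ss cs]]; apply: nc; exists s.
  rewrite us ss /=; exact: (sub_cycle (@rm_sub _ e u v)).
Qed.

Lemma edges_rm (T : finType) (e : rel T) u v : e u v ->
  #|[set p : T * T | rm e u v p.1 p.2]| < #|[set p : T * T | e p.1 p.2]|.
Proof.
move=> euv; apply: proper_card; apply/properP; split.
  by apply/subsetP=> p; rewrite !inE; apply: rm_sub.
by exists (u, v); rewrite !inE //= /rm euv !eqxx.
Qed.

Lemma deg_rm (T : finType) (e : rel T) u v x : symmetric e -> e u v -> u != v ->
  deg e x = deg (rm e u v) x + ((x == u) || (x == v)).
Proof.
move=> sy euv nuv; rewrite /deg.
have [->|nxu] := eqVneq x u.
  rewrite (cardsD1 v [set y | e u y]) inE euv addnC; congr (_ + _).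
  by apply: eq_card => y; rewrite !inE /rm eqxx /= (negbTE nuv) /= andbC orbF.
have [->|nxv] := eqVneq x v.
  rewrite (cardsD1 u [set y | e v y]) inE sy euv addnC; congr (_ + _).
  rewrite eq_sym in nuv.
  by apply: eq_card => y; rewrite !inE /rm eqxx /= (negbTE nuv) /= andbC.
rewrite addn0; apply: eq_card => y; rewrite !inE /rm.
by rewrite (negbTE nxu) (negbTE nxv) andbT.
Qed.


Lemma leaf (T : finType) (e : rel T) a b : forest e -> e a b ->
  exists v u, e v u /\ (forall w, e v w -> w = u).
Proof.
move=> [[sy ir] nc] eab.
pose P := fun n => `[< exists s : seq T, [/\ uniq s, sorted e s & size s = n] >].
have P2 : P 2.
  apply/asboolP; exists [:: a; b]; split => //=.
    rewrite inE andbT; apply/negP => /eqP hab; by rewrite hab ir in eab.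
  by rewrite eab.
have exP : exists i, P i by exists 2.
have ubP : forall i, P i -> i <= #|T|.
  move=> i /asboolP [s [us _ <-]]; rewrite -(card_uniqP us); exact: max_card.
have [i Pi Hmax] := ex_maxnP exP ubP.
move: Pi; rewrite /P => /asboolP [s [us ss si]].
have Hs2 : 2 <= size s by rewrite si; apply: Hmax P2.
case: s us ss si Hs2 => [|x [|y r]] // us ss si _.
exists x, y; split; first by case/andP: ss.
move=> w exw.
have [wn|wi] := boolP (w \in x :: y :: r).
  rewrite !inE in wn.
  case/or3P: wn => [/eqP wx|/eqP //|wr].
    by rewrite wx ir in exw.
  exfalso; apply: nc.
  case/splitPr: wr us ss => r1 r2 us ss.
  exists (x :: y :: rcons r1 w); apply/and3P; split.
  - move: us; rewrite -cat_cons -cat_rcons -cat_cons cat_uniq; by case/and3P.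
  - by rewrite /= size_rcons.
  - rewrite /= rcons_path last_rcons (sy w x) exw andbT.
    move: ss; rewrite /= -cat_rcons cat_path; by case/and3P=> -> ->.
exfalso; have : P (size (w :: x :: y :: r)).
  apply/asboolP; exists (w :: x :: y :: r); split => //.
    by rewrite cons_uniq wi.
  by rewrite /= sy exw.
by move/Hmax; rewrite -si /= ltnn.
Qed.

Lemma nbr_subA (T : finType) (e : rel T) u v (S' S : {set T}) x :
  S' \subset S -> [set w in S' | rm e u v x w] \subset [set w in S | e x w].
Proof.
move=> sub; apply/subsetP=> w; rewrite !inE => /andP [wS /rm_sub ->].
by rewrite (subsetP sub _ wS).
Qed.


Lemma nbr_cardA (T : finType) (e : rel T) u v (S' S : {set T}) :
  S' \subset S -> v \in S -> e u v ->
  #|[set w in S' | rm e u v u w]| + 1 <= #|[set w in S | e u w]|.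
Proof.
move=> sub vS euv; rewrite (cardsD1 v [set w in S | e u w]) !inE vS euv add1n addn1 ltnS.
apply: subset_leq_card; apply/subsetP=> w; rewrite !inE => /andP [wS].
rewrite /rm => /andP [-> h]; rewrite (subsetP sub _ wS) andbT.
rewrite andbT; apply: contraNN h => /eqP ->; by rewrite !eqxx.
Qed.

Lemma simA (T : finType) (e : rel T) u v tau tau' D :
  e u v -> tau v = 0 -> (forall x, x != u -> tau' x = tau x) -> tau u <= tau' u + 1 ->
  dynamo (rm e u v) tau' D -> dynamo e tau D.
Proof.
move=> euv tv ht hu HD.
have : dynamo e tau (step e tau D).
  apply: (@sim _ e (rm e u v) tau tau' (fun S' S => S' \subset S /\ v \in S) D) => //.
  - move=> S' S [sub vS]; split; last by rewrite (subsetP (step_sub _ _ _) _ vS).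
    apply/subsetP=> x; rewrite in_step => /orP [xS'|hx].
      by rewrite (subsetP (step_sub _ _ _)) // (subsetP sub).
    rewrite in_step; apply/orP; right.
    have [xu|nxu] := eqVneq x u.
      rewrite xu in hx *; apply: leq_trans hu _.
      by apply: leq_trans _ (nbr_cardA sub vS euv); rewrite leq_add2r.
    rewrite -ht //; apply: leq_trans hx _; apply: subset_leq_card; exact: nbr_subA.
  - by split; [exact: step_sub | rewrite in_step tv orbT].
  - by move=> S [sub _]; exists 0; apply/eqP; rewrite eqEsubset subsetT sub.
by case=> k Hk; exists k.+1; rewrite iterSr.
Qed.

Lemma nbr_subC (T : finType) (e : rel T) u v (S' S : {set T}) x :
  symmetric e -> (forall w, e v w -> w = u) ->
  S' :\ v \subset S -> [set w in S' | rm e u v x w] \subset [set w in S | e x w].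
Proof.
move=> sy lf sub; apply/subsetP=> w; rewrite !inE => /andP [wS rxw].
have exw := rm_sub rxw; rewrite exw andbT.
have [wv|nwv] := eqVneq w v.
  move: rxw; rewrite wv; rewrite wv sy in exw; have xu := lf _ exw.
  by rewrite xu /rm !eqxx andbF.
by apply: (subsetP sub); rewrite !inE nwv.
Qed.

Lemma simC (T : finType) (e : rel T) u v tau tau' (D' D : {set T}) :
  symmetric e -> e u v -> u != v -> (forall w, e v w -> w = u) -> tau v <= 1 ->
  (forall x, x != v -> x != u -> tau' x = tau x) -> (tau u <= tau' u \/ u \in D) ->
  D' \subset D ->
  dynamo (rm e u v) tau' D' -> dynamo e tau D.
Proof.
move=> sy euv nuv lf tv ht hu sD.
apply: (@sim _ e (rm e u v) tau tau'
   (fun S' S => S' :\ v \subset S /\ (tau u <= tau' u \/ u \in S))) => //.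
- move=> S' S [sub hS]; split; last first.
    case: hS => [->|uS]; [by left | by right; rewrite (subsetP (step_sub _ _ _))].
  apply/subsetP=> x; rewrite in_setD1 => /andP [nxv]; rewrite in_step => /orP [xS'|hx].
    by rewrite (subsetP (step_sub _ _ _)) // (subsetP sub) // !inE nxv.
  rewrite in_step; apply/orP.
  have hc := subset_leq_card (nbr_subC x sy lf sub).
  have [xu|nxu] := eqVneq x u.
    case: hS => [h|uS]; last by left; rewrite xu.
    by right; rewrite xu; apply: leq_trans h _; rewrite -xu; apply: leq_trans hc.
  by right; rewrite -ht //; apply: leq_trans hc.
- split; last exact: hu.
  by apply: subset_trans sD; apply: subsetDl.
- move=> S [sub _]; exists 1; apply/eqP; rewrite eqEsubset subsetT /=.
  apply/subsetP=> x _; rewrite in_step.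
  have [xv|nxv] := eqVneq x v; last by rewrite (subsetP sub) // !inE nxv.
  apply/orP; right; rewrite xv; apply: leq_trans tv _.
  rewrite card_gt0; apply/set0Pn; exists u; rewrite !inE (sy v u) euv andbT.
  by apply: (subsetP sub); rewrite !inE nuv.
Qed.


Definition vs (T : Type) (M : seq (T * T)) : seq T :=
  flatten [seq [:: p.1; p.2] | p <- M].

Definition good (T : finType) (e : rel T) (tau : T -> nat) (M : seq (T * T)) :=
  [/\ all (fun p => e p.1 p.2) M, uniq (vs M), all (fun x => 0 < tau x) (vs M),
      \sum_(x <- vs M) deg e x <= \sum_v tau v & dyn e tau <= size M].

Lemma sum_upd (T : finType) (f g : T -> nat) a :
  (forall x, x != a -> f x = g x) -> \sum_x f x + g a = \sum_x g x + f a.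
Proof.
move=> h; rewrite (bigD1 a) //= [X in _ = X + _](bigD1 a) //=.
rewrite (eq_bigr g) => [|x /h //]; lia.
Qed.

Lemma sum_deg_rm (T : finType) (e : rel T) u v (s : seq T) :
  symmetric e -> e u v -> u != v -> uniq s -> v \notin s ->
  \sum_(x <- s) deg e x <= \sum_(x <- s) deg (rm e u v) x + (u \in s).
Proof.
move=> sy euv nuv; elim: s => [|x s IH] /=; first by rewrite !big_nil.
rewrite !big_cons inE => /andP [xs us]; rewrite inE negb_or => /andP [nvx vs'].
have := IH us vs'; rewrite (deg_rm x sy euv nuv) (eq_sym x v) (negbTE nvx) orbF.
have [xu|nxu] := eqVneq x u.
  by rewrite -xu (negbTE xs) /=; lia.
by rewrite /=; lia.
Qed.

Lemma good_noedge (T : finType) (e : rel T) tau :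
  (forall x y, e x y = false) -> threshold_assignment e tau -> good e tau [::].
Proof.
move=> ne ht.
have t0 : forall x, tau x = 0.
  move=> x; apply/eqP; rewrite -leqn0; apply: leq_trans (ht x) _.
  by rewrite /deg leqn0 cards_eq0; apply/eqP/setP=> y; rewrite !inE ne.
split => //=; first by rewrite /vs big_nil.
have : dynamo e tau set0.
  exists 1; apply/eqP; rewrite eqEsubset subsetT /=.
  by apply/subsetP=> x _; rewrite in_step t0 leq0n orbT.
by move/dyn_le; rewrite cards0.
Qed.


Lemma key_step (T : finType) (e : rel T) u v tau :
  symmetric e -> irreflexive e -> e u v -> (forall w, e v w -> w = u) ->
  threshold_assignment e tau ->
  (forall tau', threshold_assignment (rm e u v) tau' ->
       exists M, good (rm e u v) tau' M) ->
  exists M, good e tau M.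
Proof.
move=> sy ir euv lf ht IH.
have nuv : u != v by apply/eqP=> huv; rewrite huv ir in euv.
have dv : deg e v = 1.
  rewrite /deg -(cards1 u); apply: eq_card => w; rewrite !inE.
  apply/idP/eqP => [/lf //|->]; by rewrite sy.
have dg := fun x => deg_rm x sy euv nuv.
have tv : tau v <= 1 by rewrite -dv.
have [tv0|tv1] := eqVneq (tau v) 0.
-
  pose tau' x := if x == u then (tau u).-1 else tau x.
  have ht' : threshold_assignment (rm e u v) tau'.
    move=> x; rewrite /tau'; have [->|nxu] := eqVneq x u.
      by have := ht u; rewrite (dg u) eqxx /=; lia.
    have := ht x; rewrite (dg x) (negbTE nxu) /=.
    by have [->|nxv] := eqVneq x v; [rewrite tv0 | rewrite addn0].
  have [M [gE gU gS gW gD]] := IH tau' ht'.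
  have vnot : v \notin vs M.
    apply/negP => /(allP gS); by rewrite /tau' eq_sym (negbTE nuv) tv0.
  exists M; split => //.
  + by apply/allP => p /(allP gE) /rm_sub.
  + apply/allP => x /(allP gS); rewrite /tau'; have [->|_] := eqVneq x u => //; lia.
  + have H1 := sum_deg_rm sy euv nuv gU vnot.
    have H3 : \sum_x tau x + tau' u = \sum_x tau' x + tau u.
      by apply: sum_upd => x nx; rewrite /tau' (negbTE nx).
    have tu'' : tau' u = (tau u).-1 by rewrite /tau' eqxx.
    rewrite tu'' in H3.
    have H4 : (u \in vs M) -> 0 < (tau u).-1.
      by move=> /(allP gS); rewrite /tau' eqxx.
    move: H4 H1 H3 gW; case: (u \in vs M) => /=.
      by move=> /(_ isT) H4; lia.
    move=> _; lia.
  + apply: leq_trans gD; rewrite -[dyn (rm e u v) tau']addn0.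
    apply: dyn_sim => D' HD'; exists D' => //; last by rewrite addn0.
    apply: (simA euv tv0 _ _ HD').
      by move=> x nx; rewrite /tau' (negbTE nx).
    rewrite /tau' eqxx; lia.
- have tv1' : tau v = 1 by lia.
  have [tu|tu] := ltnP (tau u) (deg e u).
  +
    pose tau' x := if x == v then 0 else tau x.
    have ht' : threshold_assignment (rm e u v) tau'.
      move=> x; rewrite /tau'; have [//|nxv] := eqVneq x v.
      have := ht x; rewrite (dg x) (negbTE nxv) orbF.
      have [xu|nxu] := eqVneq x u; last by rewrite addn0.
      by rewrite xu; move: tu; rewrite (dg u) eqxx /=; lia.
    have [M [gE gU gS gW gD]] := IH tau' ht'.
    have vnot : v \notin vs M.
      by apply/negP => /(allP gS); rewrite /tau' eqxx.
    exists M; split => //.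
    * by apply/allP => p /(allP gE) /rm_sub.
    * apply/allP => x /(allP gS); rewrite /tau'; by case: (x == v).
    * have H1 := sum_deg_rm sy euv nuv gU vnot.
      have H3 : \sum_x tau x + tau' v = \sum_x tau' x + tau v.
        by apply: sum_upd => x nx; rewrite /tau' (negbTE nx).
      have tv' : tau' v = 0 by rewrite /tau' eqxx.
      rewrite tv' tv1' in H3.
      move: H1 H3 gW; case: (u \in vs M) => /=; lia.
    * apply: leq_trans gD; rewrite -[dyn (rm e u v) tau']addn0.
      apply: dyn_sim => D' HD'; exists D' => //; last by rewrite addn0.
      apply: (simC sy euv nuv lf tv _ _ _ HD') => //.
        by move=> x nxv _; rewrite /tau' (negbTE nxv).
      by left; rewrite /tau' (negbTE nuv).
  +
    have tu' : tau u = deg e u by apply/eqP; rewrite eqn_leq ht tu.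
    pose tau' x := if (x == u) || (x == v) then 0 else tau x.
    have ht' : threshold_assignment (rm e u v) tau'.
      move=> x; rewrite /tau'; case: ifP => // /negbT; rewrite negb_or.
      by case/andP=> nxu nxv; have := ht x; rewrite (dg x) (negbTE nxu) (negbTE nxv) addn0.
    have [M [gE gU gS gW gD]] := IH tau' ht'.
    have unot : u \notin vs M.
      by apply/negP => /(allP gS); rewrite /tau' eqxx.
    have vnot : v \notin vs M.
      by apply/negP => /(allP gS); rewrite /tau' eqxx orbT.
    have du : 0 < deg e u.
      by rewrite /deg card_gt0; apply/set0Pn; exists v; rewrite inE.
    exists ((u, v) :: M); split.
    * by rewrite /= euv; apply/allP => p /(allP gE) /rm_sub.
    * rewrite /vs /= -/(vs M) !inE negb_or nuv unot vnot /=; exact: gU.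
    * rewrite /vs /= -/(vs M) tu' du tv1' /=.
      apply/allP => x /[dup] xM /(allP gS); rewrite /tau'.
      by case: ifP.
    * rewrite /vs /= -/(vs M) !big_cons dv.
      have H1 := sum_deg_rm sy euv nuv gU vnot; rewrite (negbTE unot) addn0 in H1.
      pose tau1 x := if x == u then 0 else tau x.
      have H3 : \sum_x tau x + tau1 u = \sum_x tau1 x + tau u.
        by apply: sum_upd => x nx; rewrite /tau1 (negbTE nx).
      have H4 : \sum_x tau1 x + tau' v = \sum_x tau' x + tau1 v.
        apply: sum_upd => x nxv; rewrite /tau1 /tau' (negbTE nxv) orbF.
        by case: (x == u).
      have e1 : tau1 u = 0 by rewrite /tau1 eqxx.
      have e2 : tau' v = 0 by rewrite /tau' eqxx orbT.
      have e3 : tau1 v = 1 by rewrite /tau1 eq_sym (negbTE nuv).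
      rewrite e1 in H3; rewrite e2 e3 in H4; lia.
    * rewrite /=; apply: leq_trans (_ : dyn e tau <= dyn (rm e u v) tau' + 1) _.
        apply: dyn_sim => D' HD'; exists (u |: D'); last first.
          by rewrite cardsU1 addnC leq_add2l leq_b1.
        apply: (simC sy euv nuv lf tv _ _ _ HD').
        - by move=> x nxv nxu; rewrite /tau' (negbTE nxu) (negbTE nxv).
        - by right; rewrite setU11.
        - exact: subsetUr.
      by rewrite addn1 ltnS.
Qed.


Lemma key (T : finType) n : forall (e : rel T),
  #|[set p : T * T | e p.1 p.2]| <= n -> forest e ->
  forall tau, threshold_assignment e tau -> exists M, good e tau M.
Proof.
elim: n => [|n IHn] e He Hf tau ht;
  (have [/existsP [[a b] /= eab]|ne] := boolP [exists p : T * T, e p.1 p.2]); last first.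
- exists [::]; apply: good_noedge ht => x y; apply: negbTE; exact: (existsPn ne (x, y)).
- have [v [u [evu lf]]] := leaf Hf eab.
  have [[sy ir] _] := Hf.
  have euv : e u v by rewrite sy.
  apply: (key_step sy ir euv lf ht) => tau' ht'.
  apply: IHn ht'; last exact: forest_rm.
  by rewrite -ltnS; apply: leq_trans He; apply: edges_rm.
- exists [::]; apply: good_noedge ht => x y; apply: negbTE; exact: (existsPn ne (x, y)).
- exfalso; move: He; rewrite leqn0 cards_eq0 => /eqP /setP /(_ (a, b)).
  by rewrite !inE eab.
Qed.

Lemma map_sub (T : eqType) (D : pred T) (M : seq (T * T)) :
  {subset [seq (if p.1 \in D then p.1 else p.2) | p <- M] <= vs M}.
Proof.
elim: M => //= p M IH x; rewrite inE => /orP [/eqP ->|/IH h].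
  by rewrite !inE; case: ifP => _; rewrite eqxx ?orbT.
by rewrite /vs /= -/(vs M) !inE h !orbT.
Qed.

Lemma map_uniq' (T : eqType) (D : pred T) (M : seq (T * T)) :
  uniq (vs M) -> uniq [seq (if p.1 \in D then p.1 else p.2) | p <- M].
Proof.
elim: M => //= p M IH; rewrite /vs /= -/(vs M) => /and3P [h1 h2 h3].
rewrite IH // andbT; rewrite inE negb_or in h1; case/andP: h1 => h1 h1'.
by case: ifP => _; apply/negP => /map_sub; apply/negP.
Qed.

Lemma blocked (T : finType) (e : rel T) (s : seq T) (S : {set T}) x y :
  x \in s -> e x y -> y \notin S -> x \notin S ->
  x \notin step e (fun z => if z \in s then deg e z else 0) S.
Proof.
move=> xs exy yS xS; rewrite in_step (negbTE xS) /= xs -ltnNge.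
apply: proper_card; apply/properP; split.
  by apply/subsetP=> w; rewrite !inE => /andP [].
by exists y; rewrite !inE ?exy // (negbTE yS).
Qed.

Lemma match_dyn (T : finType) (e : rel T) (M : seq (T * T)) (D : {set T}) :
  symmetric e -> all (fun p => e p.1 p.2) M -> uniq (vs M) ->
  dynamo e (fun x => if x \in vs M then deg e x else 0) D -> size M <= #|D|.
Proof.
move=> sy hE hU [k Hk].
have hit : forall p, p \in M -> (p.1 \in D) || (p.2 \in D).
  move=> [x y] pM /=; apply/negPn/negP; rewrite negb_or => /andP [xD yD].
  have xs : x \in vs M.
    elim: M pM {hE hU Hk} => //= q M IH; rewrite inE => /orP [/eqP <-|/IH h].
      by rewrite /vs /= inE eqxx.
    by rewrite /vs /= -/(vs M) !inE h !orbT.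
  have ys : y \in vs M.
    elim: M pM {hE hU Hk xs} => //= q M IH; rewrite inE => /orP [/eqP <-|/IH h].
      by rewrite /vs /= !inE eqxx orbT.
    by rewrite /vs /= -/(vs M) !inE h !orbT.
  have exy : e x y by have := allP hE _ pM.
  have : (x \notin iter k (step e (fun z => if z \in vs M then deg e z else 0)) D) &&
         (y \notin iter k (step e (fun z => if z \in vs M then deg e z else 0)) D).
    elim: k {Hk} => [|k /andP [IHx IHy]] /=; first by rewrite xD yD.
    by rewrite (blocked xs exy IHy IHx) (blocked ys _ IHx IHy) // sy.
  by rewrite Hk !inE.
rewrite -(size_map (fun p => if p.1 \in D then p.1 else p.2)) cardE.
apply: uniq_leq_size; first exact: map_uniq'.
move=> z /mapP [p pM ->]; rewrite mem_enum.
by have := hit p pM; case: ifP => // _; rewrite orFb.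
Qed.

Lemma sum_if (T : finType) (s : seq T) (f : T -> nat) : uniq s ->
  \sum_x (if x \in s then f x else 0) = \sum_(x <- s) f x.
Proof. by move=> us; rewrite (big_uniq _ us) [RHS]big_mkcond. Qed.

Theorem theorem2 (R : realType) (T : finType) (e : rel T) (t : R) :
  forest e -> (0 < t)%R ->
  exists tau' : T -> nat,
    [/\ threshold_assignment e tau', zero_degree_assignment e tau',
        (avg_tau R tau' <= t)%R & Ldyn e t = dyn e tau'].
Proof.
move=> Hf t0.
pose A := [pred f : {ffun T -> 'I_#|T|.+1} |
  `[< threshold_assignment e (fun v => f v) >] && (avg_tau R (fun v => f v) <= t)%R].
have Ane : 0 < #|A|.
  apply/card_gt0P; exists [ffun=> ord0]; rewrite inE; apply/andP; split.
    by apply/asboolP => x; rewrite ffunE.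
  rewrite /avg_tau big1 ?mul0r ?(ltW t0) // => x _; by rewrite ffunE.
have [f0 Af0 Hf0] := @eq_bigmax_cond _ A (fun f => dyn e (fun v => f v)) Ane.
have HL : Ldyn e t = dyn e (fun v => f0 v) by exact: Hf0.
move: Af0; rewrite inE => /andP [/asboolP ht0 hav0].
have [M [gE gU gS gW gD]] := key (leqnn _) Hf ht0.
pose tau' x := if x \in vs M then deg e x else 0.
have ht' : threshold_assignment e tau' by move=> x; rewrite /tau'; case: ifP.
have hs : (\sum_v tau' v = \sum_(x <- vs M) deg e x)%N by apply: sum_if.
have hav : (avg_tau R tau' <= t)%R.
  apply: le_trans hav0; rewrite /avg_tau; apply: ler_wpM2r.
    by rewrite invr_ge0 ler0n.
  by rewrite ler_nat hs.
exists tau'; split => //.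
  by move=> x; rewrite /tau'; case: ifP => _; [right | left].
apply/anti_leq/andP; split.
  rewrite HL; apply: leq_trans gD _; apply: dyn_ge => D HD.
  exact: match_dyn (proj1 (proj1 Hf)) gE gU HD.
pose f1 : {ffun T -> 'I_#|T|.+1} := [ffun x => inord (tau' x)].
have hf1 : (fun v => (f1 v : nat)) = tau'.
  apply: funext => x; rewrite /f1 ffunE inordK // ltnS.
  apply: leq_trans (ht' x) _; exact: max_card.
have : A f1 by rewrite /A inE hf1 hav andbT; apply/asboolP.
move/(leq_bigmax_cond (F := fun f : {ffun T -> 'I_#|T|.+1} => dyn e (fun v => f v))).
by rewrite hf1.
Qed.
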